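(* The variety $\mathsf{V}(S_{(4,411)})$ is the ai-semiring variety defined by the identities $xy\approx xy+x$, $x+yx\approx x+yx+xy$, $x_1x_2x_3\approx x_1x_2x_3+x_4$, $x_1x_2+x_3x_4\approx x_1x_2+x_3x_4+x_1x_3$, $x_1x_2+x_3x_4\approx x_1x_2+x_3x_4+x_1x_4$.
   Context: An ai-semiring is an algebra $(S,+,\cdot)$ with $(S,+)$ a semilattice, $(S,\cdot)$ a semigroup, and both distributive laws. $\mathsf{V}(S)$ is the variety generated by $S$; ''the ai-semiring variety defined by identities $\Sigma$'' is the class of all ai-semirings satisfying $\Sigma$. $S_{(4,411)}$ has carrier $\{1,2,3,4\}$; addition: $x+x=x$, $2+x=x$, $1+x=1$ for all $x$, $3+4=1$; multiplication (row $a$, column $b$ gives $a\cdot b$): row $1$: $1,1,1,1$; row $2$: $1,3,1,3$; row $3$: $1,1,1,1$; row $4$: $1,1,1,1$. *)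

(* Defs.v *)
Record aiSemiring := AiSemiring {
  carrier :> Type;
  sadd : carrier -> carrier -> carrier;
  smul : carrier -> carrier -> carrier;
  sadd_assoc : forall x y z, sadd x (sadd y z) = sadd (sadd x y) z;
  sadd_comm : forall x y, sadd x y = sadd y x;
  sadd_idem : forall x, sadd x x = x;
  smul_assoc : forall x y z, smul x (smul y z) = smul (smul x y) z;
  smul_distl : forall x y z, smul x (sadd y z) = sadd (smul x y) (smul x z);
  smul_distr : forall x y z, smul (sadd x y) z = sadd (smul x z) (smul y z)
}.

Inductive S4 : Type := e1 | e2 | e3 | e4.

Definition S411_add (a b : S4) : S4 :=
  match a, b with
  | e1, _ => e1
  | _, e1 => e1
  | e2, y => y
  | x, e2 => x
  | e3, e3 => e3
  | e4, e4 => e4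
  | e3, e4 => e1
  | e4, e3 => e1
  end.

Definition S411_mul (a b : S4) : S4 :=
  match a, b with
  | e2, e2 => e3
  | e2, e4 => e3
  | _, _ => e1
  end.

(** Membership in V(S_(4,411)) = HSP(S_(4,411)):
    A is a homomorphic image of a subalgebra of a direct power S_(4,411)^I. *)
Definition in_V_S411 (A : aiSemiring) : Prop :=
  exists (I : Type) (P : (I -> S4) -> Prop),
    (forall f g, P f -> P g -> P (fun i => S411_add (f i) (g i))) /\
    (forall f g, P f -> P g -> P (fun i => S411_mul (f i) (g i))) /\
    exists h : {f : I -> S4 | P f} -> carrier A,
      (forall a : carrier A, exists u, h u = a) /\
      (forall u v (Huv : P (fun i => S411_add (proj1_sig u i) (proj1_sig v i))),
          h (exist _ _ Huv) = sadd A (h u) (h v)) /\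
      (forall u v (Huv : P (fun i => S411_mul (proj1_sig u i) (proj1_sig v i))),
          h (exist _ _ Huv) = smul A (h u) (h v)).

Definition satisfies_Sigma (A : aiSemiring) : Prop :=
  let add := sadd A in let mul := smul A in
  (forall x y : A, mul x y = add (mul x y) x) /\
  (forall x y : A, add x (mul y x) = add (add x (mul y x)) (mul x y)) /\
  (forall x1 x2 x3 x4 : A,
      mul (mul x1 x2) x3 = add (mul (mul x1 x2) x3) x4) /\
  (forall x1 x2 x3 x4 : A,
      add (mul x1 x2) (mul x3 x4) = add (add (mul x1 x2) (mul x3 x4)) (mul x1 x3)) /\
  (forall x1 x2 x3 x4 : A,
      add (mul x1 x2) (mul x3 x4) = add (add (mul x1 x2) (mul x3 x4)) (mul x1 x4)).

(* Main.v *)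
Require Import Defs.
From Stdlib Require Import List ClassicalEpsilon FunctionalExtensionality ProofIrrelevance.
Import ListNotations.

Inductive term (X : Type) : Type :=
| Var : X -> term X | Add : term X -> term X -> term X | Mul : term X -> term X -> term X.
Arguments Var {X}. Arguments Add {X}. Arguments Mul {X}.

Fixpoint eval (R : aiSemiring) {X} (v : X -> R) (t : term X) : R :=
  match t with
  | Var x => v x
  | Add t u => sadd R (eval R v t) (eval R v u)
  | Mul t u => smul R (eval R v t) (eval R v u)
  end.

Fixpoint ew (R : aiSemiring) {X} (v : X -> R) (x : X) (l : list X) : R :=
  match l with nil => v x | y :: l' => smul R (v x) (ew R v y l') end.

Definition ewp (R : aiSemiring) {X} (v : X -> R) (w : X * list X) : R := ew R v (fst w) (snd w).
Definition wcat {X} (w1 w2 : X * list X) : X * list X := (fst w1, snd w1 ++ fst w2 :: snd w2).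

Fixpoint inw {X} (w : X * list X) (t : term X) : Prop :=
  match t with
  | Var x => w = (x, nil)
  | Add t u => inw w t \/ inw w u
  | Mul t u => exists w1 w2, inw w1 t /\ inw w2 u /\ w = wcat w1 w2
  end.

Definition le (R : aiSemiring) (a b : R) : Prop := sadd R a b = b.

Section Gen.
Variable R : aiSemiring.

Lemma le_refl a : le R a a. Proof. apply sadd_idem. Qed.
Lemma le_trans a b c : le R a b -> le R b c -> le R a c.
Proof. unfold le; intros H1 H2. rewrite <- H2, sadd_assoc, H1. reflexivity. Qed.
Lemma le_addl a b : le R a (sadd R a b).
Proof. unfold le. rewrite sadd_assoc, sadd_idem. reflexivity. Qed.
Lemma le_addr a b : le R b (sadd R a b).
Proof. rewrite sadd_comm. apply le_addl. Qed.
Lemma add_lub a b c : le R a c -> le R b c -> le R (sadd R a b) c.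
Proof. unfold le; intros H1 H2. rewrite <- sadd_assoc, H2, H1. reflexivity. Qed.
Lemma le_antisym a b : le R a b -> le R b a -> a = b.
Proof. unfold le; intros H1 H2. rewrite <- H1, sadd_comm. symmetry. exact H2. Qed.
Lemma mul_monol a b c : le R a b -> le R (smul R c a) (smul R c b).
Proof. unfold le; intros H. rewrite <- smul_distl, H. reflexivity. Qed.
Lemma mul_monor a b c : le R a b -> le R (smul R a c) (smul R b c).
Proof. unfold le; intros H. rewrite <- smul_distr, H. reflexivity. Qed.
Lemma le_of_id P Q : P = sadd R P Q -> le R Q P.
Proof. unfold le; intros H. rewrite sadd_comm. symmetry. exact H. Qed.

Variable X : Type.
Variable v : X -> R.

Lemma ew_cat : forall l x y m, ew R v x (l ++ y :: m) = smul R (ew R v x l) (ew R v y m).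
Proof.
  induction l as [|z l IH]; intros x y m; simpl. reflexivity.
  rewrite IH, smul_assoc. reflexivity.
Qed.
Lemma ewp_cat w1 w2 : ewp R v (wcat w1 w2) = smul R (ewp R v w1) (ewp R v w2).
Proof. unfold ewp, wcat; simpl. apply ew_cat. Qed.

Lemma inw_le : forall t w, inw w t -> le R (ewp R v w) (eval R v t).
Proof.
  induction t as [x|t1 IH1 t2 IH2|t1 IH1 t2 IH2]; intros w H; simpl in *.
  - subst. apply le_refl.
  - destruct H as [H|H]. eapply le_trans. apply IH1, H. apply le_addl.
    eapply le_trans. apply IH2, H. apply le_addr.
  - destruct H as (w1 & w2 & H1 & H2 & ->). rewrite ewp_cat.
    eapply le_trans. apply mul_monor, IH1, H1. apply mul_monol, IH2, H2.
Qed.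

Lemma eval_ub : forall t (f : R -> R) c, (forall a b, f (sadd R a b) = sadd R (f a) (f b)) ->
  (forall w, inw w t -> le R (f (ewp R v w)) c) -> le R (f (eval R v t)) c.
Proof.
  induction t as [x|t1 IH1 t2 IH2|t1 IH1 t2 IH2]; intros f c Hf H; simpl.
  - apply (H (x, nil)). reflexivity.
  - rewrite Hf. apply add_lub; [apply IH1|apply IH2]; auto; intros; apply H; simpl; auto.
  - apply (IH1 (fun a => f (smul R a (eval R v t2))) c).
    + intros a b. rewrite smul_distr, Hf. reflexivity.
    + intros w1 Hw1. apply (IH2 (fun b => f (smul R (ewp R v w1) b)) c).
      * intros a b. rewrite smul_distl, Hf. reflexivity.
      * intros w2 Hw2. rewrite <- ewp_cat. apply H. simpl. exists w1, w2. auto.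
Qed.

Lemma eval_ub' t c : (forall w, inw w t -> le R (ewp R v w) c) -> le R (eval R v t) c.
Proof. apply (eval_ub t (fun a => a)); auto. Qed.
End Gen.

Definition SS : aiSemiring.
Proof.
  refine (AiSemiring S4 S411_add S411_mul _ _ _ _ _ _);
  intros; repeat match goal with x : S4 |- _ => destruct x end; reflexivity.
Defined.

Definition upd {X : Type} (x : X) (c : S4) : X -> S4 :=
  fun z => if excluded_middle_informative (z = x) then c else e2.
Lemma upd_eq {X} (x : X) c : upd x c x = c.
Proof. unfold upd. destruct (excluded_middle_informative (x = x)); congruence. Qed.
Lemma upd_neq {X} (x z : X) c : z <> x -> upd x c z = e2.
Proof. unfold upd. destruct (excluded_middle_informative (z = x)); congruence. Qed.
Lemma upd_24 {X} (x z : X) : upd x e4 z = e2 \/ upd x e4 z = e4.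
Proof. unfold upd. destruct (excluded_middle_informative (z = x)); auto. Qed.
Lemma upd_23 {X} (x z : X) : upd x e3 z = e2 \/ upd x e3 z = e3.
Proof. unfold upd. destruct (excluded_middle_informative (z = x)); auto. Qed.

Section Key.
Variable A : aiSemiring.
Hypothesis HS : satisfies_Sigma A.
Variable X : Type.
Variable va : X -> A.

Lemma top_le x a b l y : le A y (ewp A va (x, a :: b :: l)).
Proof.
  destruct HS as (_ & _ & H3 & _ & _).
  unfold ewp; simpl. rewrite smul_assoc. apply le_of_id. apply H3.
Qed.

Lemma long_S (v : X -> S4) x a b l : ewp SS v (x, a :: b :: l) = e1.
Proof.
  unfold ewp; simpl. destruct (v x), (v a), (ew SS v b l); reflexivity.
Qed.

Lemma key (u : term X) (w : X * list X) :
  (forall v : X -> S4, le SS (ewp SS v w) (eval SS v u)) -> le A (ewp A va w) (eval A va u).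
Proof.
  intros HSu.
  destruct HS as (H1 & H2 & H3 & H4 & H5).
  destruct (classic (exists x a b l, inw (x, a :: b :: l) u)) as [(x & a & b & l & Hin)|Hno].
  { eapply le_trans. apply top_le with (x := x) (a := a) (b := b) (l := l).
    apply inw_le, Hin. }
  assert (Hshort : forall x l, inw (x, l) u -> l = nil \/ exists b, l = [b]).
  { intros x [|a [|b l]] Hin; auto. eauto. exfalso; apply Hno; eauto. }
  assert (Hcontra : forall v : X -> S4, (forall w', inw w' u -> le SS (ewp SS v w') e3) ->
            ewp SS v w = e1 \/ ewp SS v w = e4 -> False).
  { intros v Hb Hw. assert (Hl := le_trans SS _ _ _ (HSu v) (eval_ub' SS X v u e3 Hb)).
    destruct Hw as [Hw|Hw]; rewrite Hw in Hl; discriminate Hl. }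
  destruct w as [x [|y [|z l]]].
  -
    destruct (classic (inw (x, nil) u)) as [Hv|Hv]. { apply (inw_le A X va u _ Hv). }
    destruct (classic (exists c, inw (x, [c]) u)) as [[c Hc]|Hc].
    { eapply le_trans; [|apply (inw_le A X va u _ Hc)].
      unfold ewp; simpl. apply le_of_id. apply H1. }
    exfalso. apply (Hcontra (upd x e4)).
    + intros [a l] Hin. destruct (Hshort _ _ Hin) as [->|[b ->]].
      * assert (a <> x) by (intro; subst; auto). unfold ewp; simpl. rewrite upd_neq; auto. reflexivity.
      * assert (a <> x) by (intro; subst; eauto). unfold ewp; simpl. rewrite upd_neq; auto.
        destruct (upd_24 x b) as [-> | ->]; reflexivity.
    + right. unfold ewp; simpl. apply upd_eq.
  -
    destruct (classic ((exists d, inw (y, [d]) u) \/ (exists d, inw (d, [y]) u))) as [Hy|Hy].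
    2:{ exfalso. apply (Hcontra (upd y e3)).
      + intros [a l] Hin. destruct (Hshort _ _ Hin) as [->|[b ->]].
        * unfold ewp; simpl. destruct (upd_23 y a) as [-> | ->]; reflexivity.
        * assert (a <> y) by (intro; subst; eauto). assert (b <> y) by (intro; subst; eauto).
          unfold ewp; simpl. rewrite !upd_neq; auto. reflexivity.
      + left. unfold ewp; simpl. rewrite upd_eq. destruct (upd y e3 x); reflexivity. }
    assert (Hxc : exists c, le A (smul A (va x) (va c)) (eval A va u)).
    { destruct (classic (exists c, inw (x, [c]) u)) as [[c Hc]|Hc].
      { exists c. apply (inw_le A X va u _ Hc). }
      destruct (classic (inw (x, nil) u)) as [Hv|Hv].
      2:{ exfalso. apply (Hcontra (upd x e4)).
        + intros [a l] Hin. destruct (Hshort _ _ Hin) as [->|[b ->]].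
          * assert (a <> x) by (intro; subst; auto). unfold ewp; simpl. rewrite upd_neq; auto. reflexivity.
          * assert (a <> x) by (intro; subst; eauto). unfold ewp; simpl. rewrite upd_neq; auto.
            destruct (upd_24 x b) as [-> | ->]; reflexivity.
        + left. unfold ewp; simpl. rewrite upd_eq. destruct (upd x e4 y); reflexivity. }
      destruct (classic (exists d, inw (d, [x]) u)) as [[d Hd]|Hd].
      2:{ exfalso. apply (Hcontra (upd x e3)).
        + intros [a l] Hin. destruct (Hshort _ _ Hin) as [->|[b ->]].
          * unfold ewp; simpl. destruct (upd_23 x a) as [-> | ->]; reflexivity.
          * assert (a <> x) by (intro; subst; eauto). assert (b <> x) by (intro; subst; eauto).
            unfold ewp; simpl. rewrite !upd_neq; auto. reflexivity.
        + left. unfold ewp; simpl. rewrite upd_eq. destruct (upd x e3 y); reflexivity. }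
      exists d. eapply le_trans with (b := sadd A (va x) (smul A (va d) (va x))).
      - apply le_of_id. apply H2.
      - apply add_lub. apply (inw_le A X va u _ Hv). apply (inw_le A X va u _ Hd). }
    destruct Hxc as [c Hc]. unfold ewp; simpl.
    destruct Hy as [[d Hd]|[d Hd]].
    + eapply le_trans with (b := sadd A (smul A (va x) (va c)) (smul A (va y) (va d))).
      * apply le_of_id. apply H4.
      * apply add_lub. exact Hc. apply (inw_le A X va u _ Hd).
    + eapply le_trans with (b := sadd A (smul A (va x) (va c)) (smul A (va d) (va y))).
      * apply le_of_id. apply H5.
      * apply add_lub. exact Hc. apply (inw_le A X va u _ Hd).
  -
    exfalso. apply (Hcontra (fun _ => e2)).
    + intros [a l'] Hin. destruct (Hshort _ _ Hin) as [->|[b ->]]; reflexivity.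
    + left. apply long_S.
Qed.

Lemma complete (t u : term X) :
  (forall v : X -> S4, eval SS v t = eval SS v u) -> eval A va t = eval A va u.
Proof.
  intros H. apply le_antisym; apply eval_ub'; intros w Hw; apply key; intros v.
  - rewrite <- H. apply inw_le, Hw.
  - rewrite H. apply inw_le, Hw.
Qed.
End Key.

Lemma sig_ext {I : Type} (P : (I -> S4) -> Prop) (a b : {f | P f}) :
  (forall i, proj1_sig a i = proj1_sig b i) -> a = b.
Proof.
  destruct a as [f pf], b as [g pg]; simpl; intros H.
  assert (f = g) by (apply functional_extensionality; exact H). subst.
  f_equal. apply proof_irrelevance.
Qed.

Theorem proposition5p2 :
  forall A : aiSemiring, in_V_S411 A <-> satisfies_Sigma A.
Proof.
  intros A; split.
  - intros (I & P & Hadd & Hmul & h & Hsurj & Hha & Hhm).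
    set (aP := fun u v : {f | P f} => exist P _ (Hadd _ _ (proj2_sig u) (proj2_sig v))).
    set (mP := fun u v : {f | P f} => exist P _ (Hmul _ _ (proj2_sig u) (proj2_sig v))).
    assert (EA : forall u v, h (aP u v) = sadd A (h u) (h v)) by (intros; apply Hha).
    assert (EM : forall u v, h (mP u v) = smul A (h u) (h v)) by (intros; apply Hhm).
    unfold satisfies_Sigma; repeat split; intros;
    repeat match goal with
    | x : carrier A |- _ => destruct (Hsurj x) as [? <-]; clear x
    end;
    rewrite <- ?EA, <- ?EM, <- ?EA, <- ?EM, <- ?EA, <- ?EM, <- ?EA, <- ?EM;
    f_equal; apply sig_ext; intros i; simpl;
    repeat match goal with
    | |- context [proj1_sig ?u i] => destruct (proj1_sig u i)
    end; reflexivity.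
  - intros HS.
    set (X := carrier A).
    set (P := fun f : (X -> S4) -> S4 => exists t : term X, forall v, f v = eval SS v t).
    exists (X -> S4), P.
    split. { intros f g [t Ht] [u Hu]. exists (Add t u). intros v; simpl. rewrite Ht, Hu. reflexivity. }
    split. { intros f g [t Ht] [u Hu]. exists (Mul t u). intros v; simpl. rewrite Ht, Hu. reflexivity. }
    set (tm := fun u : {f | P f} => proj1_sig (constructive_indefinite_description _ (proj2_sig u))).
    assert (Htm : forall u v, proj1_sig u v = eval SS v (tm u)).
    { intros u v. unfold tm. destruct (constructive_indefinite_description _ _) as [t Ht]. apply Ht. }
    exists (fun u => eval A (fun x : X => x) (tm u)).
    split; [|split].
    + intros a.
      exists (exist P (fun v => v a) (ex_intro (fun t => forall v, v a = eval SS v t) (Var a) (fun v => eq_refl))).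
      transitivity (eval A (fun x : X => x) (Var a)); [|reflexivity].
      apply complete; auto. intros v. rewrite <- Htm. reflexivity.
    + intros u v Huv. change (sadd A _ _) with (eval A (fun x : X => x) (Add (tm u) (tm v))).
      apply complete; auto. intros w. rewrite <- Htm. simpl. rewrite <- !Htm. reflexivity.
    + intros u v Huv. change (smul A _ _) with (eval A (fun x : X => x) (Mul (tm u) (tm v))).
      apply complete; auto. intros w. rewrite <- Htm. simpl. rewrite <- !Htm. reflexivity.
Qed.
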